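(* Let $p$ be a prime, $\alpha\ge1$, $\beta\ge0$, and let $\delta\ge(\beta(p-1)+1)p^{\alpha-1}$ be an integer. Then $p^\beta$ divides $\binom{\delta}{x}_{p^\alpha}$ for every $x\in\mathbb{Z}_{p^\alpha}$.
   Context: For integers $d\ge0$, $q\ge1$ and a residue class $x\in\mathbb{Z}_q=\mathbb{Z}/q\mathbb{Z}$, $\binom{d}{x}_q:=\sum_{\hat x\in x,\ \hat x\ge0}(-1)^{\hat x}\binom{d}{\hat x}\in\mathbb{Z}$, the sum running over the nonnegative integer representatives $\hat x$ of $x$ (only $\hat x\le d$ give nonzero terms). *)

(* Defs.v *)
From mathcomp Require Import all_boot all_order all_algebra.
Set Implicit Arguments. Unset Strict Implicit. Unset Printing Implicit Defensive.
Import GRing.Theory Num.Theory.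
Local Open Scope ring_scope.

(* Only k <= d contribute,
   so the sum is taken over 0 <= k < d+1 with k = x (mod q). *)
Definition binom_q (d q : nat) (x : 'I_q) : int :=
  \sum_(0 <= k < d.+1 | (k %% q == x %% q)%N) (-1) ^+ k * ('C(d, k))%:Z.
Arguments binom_q d q x : clear implicits.

(* Main.v *)
Require Import Defs.
From mathcomp Require Import all_boot all_order all_algebra.
From mathcomp Require Import ring zify lra.
Import GRing.Theory Num.Theory.
Local Open Scope ring_scope.

Lemma frobF (p m : nat) (y : {poly 'F_p}) : prime p ->
  (1 - y) ^+ (p ^ m)%N = 1 - y ^+ (p ^ m)%N.
Proof.
move=> pr.
have ch : p \in [pchar {poly 'F_p}] by rewrite pchar_poly pchar_Fp.
have hn : [pchar {poly 'F_p}].-nat (p ^ m)%N.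
  by rewrite (eq_pnat _ (pcharf_eq ch)) pnatX pnat_id.
by rewrite exprDn_pchar // exprNn_pchar // expr1n.
Qed.

Lemma kerp (p : nat) (P : {poly int}) : prime p ->
  map_poly (fun c : int => (c%:~R : 'F_p)) P = 0 ->
  exists B, P = (p%:Z)%:P * B.
Proof.
move=> pr H0.
exists (\poly_(i < size P) ((P`_i) %/ p)%Z).
apply/polyP => i; rewrite coefCM coef_poly.
case: ltnP => hi; last by rewrite nth_default // mulr0.
have : (map_poly (fun c : int => (c%:~R : 'F_p)) P)`_i = 0 by rewrite H0 coef0.
rewrite coef_map_id0 ?mulr0z //.
move=> hz.
have hd : (p%:Z %| P`_i)%Z.
  move: hz; case: (P`_i) => n h.
    by rewrite /dvdz unfold_in /= (dvdn_pcharf (pchar_Fp pr)); apply/eqP.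
  have h2 : (n.+1%:R : 'F_p) = 0.
    rewrite NegzE rmorphN /= in h.
    by move/eqP: h; rewrite oppr_eq0 => /eqP.
  by rewrite /dvdz unfold_in /= (dvdn_pcharf (pchar_Fp pr)) h2.
by rewrite mulrC divzK.
Qed.
Lemma phiF (p n : nat) : prime p -> (0 < n)%N ->
  \sum_(i < p) ('X^n : {poly 'F_p}) ^+ i = (1 - 'X^n) ^+ (p - 1).
Proof.
move=> pr n0.
set s : {poly 'F_p} := 'X^n.
have e1 : (1 - s) * \sum_(i < p) s ^+ i = 1 - s ^+ p.
  have := subrXX 1 s p; rewrite expr1n => ->.
  by congr (_ * _); apply: eq_bigr => i _; rewrite expr1n mul1r.
have e2 : (1 - s) ^+ p = 1 - s ^+ p by have := @frobF p 1 s pr; rewrite expn1.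
have nz : 1 - s != 0.
  rewrite -opprB oppr_eq0; apply: monic_neq0; exact: monicXnsubC.
apply: (mulfI nz); rewrite e1 -exprS subn1 prednK; last exact: prime_gt0.
by rewrite e2.
Qed.

Lemma F1 (p m : nat) : prime p ->
  exists h : {poly int}, (1 - 'X) ^+ (p ^ m)%N = (1 - 'X^(p ^ m)%N) + (p%:Z)%:P * h.
Proof.
move=> pr.
have H0 : map_poly (fun c : int => (c%:~R : 'F_p)) ((1 - 'X) ^+ (p ^ m)%N - (1 - 'X^(p ^ m)%N)) = 0.
  by rewrite rmorphB /= rmorphXn /= !rmorphB /= rmorph1 map_polyX map_polyXn frobF // subrr.
have [h Hh] := @kerp p _ pr H0.
by exists h; rewrite -Hh addrC subrKC.
Qed.

Lemma F2 (p n : nat) : prime p -> (0 < n)%N ->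
  exists g : {poly int}, (1 - 'X^n) ^+ (p - 1) = \sum_(i < p) ('X^n) ^+ i + (p%:Z)%:P * g.
Proof.
move=> pr n0.
have H0 : map_poly (fun c : int => (c%:~R : 'F_p)) ((1 - 'X^n) ^+ (p - 1) - \sum_(i < p) ('X^n : {poly int}) ^+ i) = 0.
  rewrite rmorphB /= rmorphXn /= rmorphB /= rmorph1 map_polyXn rmorph_sum /=.
  rewrite -(@phiF p n pr n0); apply/eqP; rewrite subr_eq0; apply/eqP.
  by apply: eq_bigr => i _; rewrite rmorphXn /= map_polyXn.
have [h Hh] := @kerp p _ pr H0.
by exists h; rewrite -Hh addrC subrKC.
Qed.
Definition inI (M pp : {poly int}) (k : nat) (P : {poly int}) :=
  exists A B, P = A * M + pp ^+ k * B.

Lemma inI0 M pp k : inI M pp k 0.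
Proof. by exists 0, 0; rewrite !mul0r mulr0 addr0. Qed.

Lemma inID M pp k P Q : inI M pp k P -> inI M pp k Q -> inI M pp k (P + Q).
Proof.
move=> [A [B ->]] [C [D ->]]; exists (A + C), (B + D); ring.
Qed.

Lemma inIMl M pp k P Q : inI M pp k P -> inI M pp k (P * Q).
Proof.
move=> [A [B ->]]; exists (A * Q), (B * Q); ring.
Qed.

Lemma inIMr M pp k P Q : inI M pp k P -> inI M pp k (Q * P).
Proof. by move=> h; rewrite mulrC; apply: inIMl. Qed.

Lemma inIMM M pp j k P Q : inI M pp j P -> inI M pp k Q -> inI M pp (j + k) (P * Q).
Proof.
move=> [A [B ->]] [C [D ->]].
exists (A * C * M + A * pp ^+ k * D + pp ^+ j * B * C), (B * D); rewrite exprD; ring.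
Qed.

Lemma inIpp M pp k B : inI M pp k (pp ^+ k * B).
Proof. by exists 0, B; rewrite mul0r add0r. Qed.

Lemma inI_le M pp j k P : (j <= k)%N -> inI M pp k P -> inI M pp j P.
Proof.
move=> jk [A [B ->]]; exists A, (pp ^+ (k - j) * B).
by rewrite mulrA -exprD subnKC.
Qed.

Lemma inI_sum M pp k n (F : 'I_n -> {poly int}) :
  (forall i, inI M pp k (F i)) -> inI M pp k (\sum_(i < n) F i).
Proof.
move=> H; apply: (big_ind (inI M pp k)) => //; [exact: inI0 | exact: inID].
Qed.

Lemma inImuln M pp k P c : inI M pp k P -> inI M pp k (P *+ c).
Proof. by move=> h; rewrite -mulr_natr; apply: inIMl. Qed.
Lemma upow_aux (M pp u Phi g : {poly int}) (p : nat) :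
  u * Phi = - M -> u ^+ (p - 1) = Phi + pp * g ->
  forall k, exists A, u ^+ (k * (p - 1) + 1) = pp ^+ k * g ^+ k * u + A * M.
Proof.
move=> Hu Hg; elim=> [|k [A IH]].
  by exists 0; rewrite mul0n add0n expr1 !expr0; ring.
have e : (k.+1 * (p - 1) + 1 = (k * (p - 1) + 1) + (p - 1))%N by rewrite mulSn; lia.
rewrite e exprD IH Hg.
exists (- pp ^+ k * g ^+ k + A * (Phi + pp * g)).
have HM : M = - (u * Phi) by rewrite Hu opprK.
rewrite !exprS HM; ring.
Qed.

Lemma upow (M pp u Phi g : {poly int}) (p : nat) :
  u * Phi = - M -> u ^+ (p - 1) = Phi + pp * g ->
  forall c j, (c * (p - 1) < j)%N -> inI M pp c (u ^+ j).
Proof.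
move=> Hu Hg c j hj.
have [A HA] := @upow_aux M pp u Phi g p Hu Hg c.
rewrite -(subnKC hj) exprD -addn1 HA.
apply: inIMl; apply: inID; last by exists A, 0; rewrite mulr0 addr0.
by rewrite -mulrA; apply: inIpp.
Qed.

Lemma mainI (M pp u Phi g h : {poly int}) (p beta : nat) :
  (1 < p)%N -> u * Phi = - M -> u ^+ (p - 1) = Phi + pp * g ->
  inI M pp beta ((u + pp * h) ^+ (beta * (p - 1) + 1)).
Proof.
move=> p1 Hu Hg.
rewrite exprDn; apply: inI_sum => i; apply: inImuln.
rewrite exprMn.
case: (leqP (i : nat) beta) => hi.
  rewrite mulrA; apply: (@inI_le M pp beta (beta - i + i)); first by rewrite subnK.
  apply: inIMl; apply: inIMM; last by rewrite -[pp ^+ i]mulr1; exact: inIpp.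
  apply: (@upow M pp u Phi g p Hu Hg).
  have := ltn_ord i; rewrite ltnS => hi2.
  nia.
apply: inIMr.
rewrite -(subnKC (ltnW hi)) exprD -mulrA; exact: inIpp.
Qed.
Definition sumc (q y N : nat) (P : {poly int}) : int :=
  \sum_(0 <= k < N | (k %% q == y %% q)%N) P`_k.

Lemma sumcB q y N (P Q : {poly int}) : sumc q y N (P - Q) = sumc q y N P - sumc q y N Q.
Proof. by rewrite /sumc -sumrB; apply: eq_bigr => k _; rewrite coefB. Qed.

Lemma sumcD q y N (P Q : {poly int}) : sumc q y N (P + Q) = sumc q y N P + sumc q y N Q.
Proof. by rewrite /sumc -big_split; apply: eq_bigr => k _; rewrite coefD. Qed.

Lemma sumc_pp q y N (c : int) b (B : {poly int}) : sumc q y N (c%:P ^+ b * B) = c ^+ b * sumc q y N B.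
Proof.
by rewrite /sumc -polyC_exp mulr_sumr; apply: eq_bigr => k _; rewrite coefCM.
Qed.

Lemma sumc_ext q y N N' (P : {poly int}) : (N' <= N)%N -> (forall k, (N' <= k)%N -> P`_k = 0) ->
  sumc q y N P = sumc q y N' P.
Proof.
move=> hN hP; rewrite /sumc (@big_cat_nat _ _ _ N') //=.
by rewrite [X in _ + X]big1_seq ?addr0 // => k /andP [] _; rewrite mem_index_iota => /andP [] /hP.
Qed.

Lemma sumc_shift q y N (A : {poly int}) : (size A + q <= N)%N ->
  sumc q y N (A * 'X^q) = sumc q y N A.
Proof.
move=> hN; rewrite /sumc (@big_cat_nat _ _ _ q) //=; last exact: (leq_trans (leq_addl _ _) hN).
rewrite big1_seq ?add0r; last by move=> k /andP [] _; rewrite mem_index_iota => /andP [] _ hk; rewrite coefMXn hk.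
rewrite -{1}(add0n q) big_addn.
transitivity (sumc q y (N - q) A).
  rewrite /sumc; apply: eq_big => [k|k _]; first by rewrite modnDr.
  by rewrite coefMXn ltnNge leq_addl /= addnK.
symmetry; apply: sumc_ext; first exact: leq_subr.
move=> k hk; apply: nth_default; apply: leq_trans hk.
rewrite leq_subRL; first by rewrite addnC.
by apply: leq_trans hN; apply: leq_addl.
Qed.
Lemma coefX1 (d k : nat) :
  ((1 - 'X : {poly int}) ^+ d)`_k = (-1) ^+ k * ('C(d, k))%:Z.
Proof.
have -> : (1 - 'X : {poly int}) ^+ d =
    \sum_(i < d.+1) ((-1) ^+ i * ('C(d, i))%:Z) *: 'X^i.
  rewrite addrC exprD1n; apply: eq_bigr => i _.
  rewrite (exprNn 'X) -mul_polyC polyCM polyC_exp polyCN polyC1 -[('C(d, i))%:Z]natz polyC_natr.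
  by rewrite -mulr_natr -mulrA [_ * 'X^i]mulrC mulrA.
rewrite coef_sumMXn.
have -> : \sum_(i < d.+1 | true && (nat_of_ord i == k)) ((-1) ^+ i * ('C(d, i))%:Z)
       = \sum_(i < d.+1 | nat_of_ord i == k) ((-1) ^+ i * ('C(d, i))%:Z) by [].
rewrite (big_ord1_eq _ (fun i => (-1) ^+ i * ('C(d, i))%:Z)).
by case: ltnP => // hk; rewrite bin_small // mulr0.
Qed.
Theorem corollary3p5 (p alpha beta delta : nat) :
  prime p -> (1 <= alpha)%N ->
  ((beta * (p - 1) + 1) * p ^ (alpha - 1) <= delta)%N ->
  forall x : 'I_(p ^ alpha),
    ((p ^ beta)%:Z %| binom_q delta (p ^ alpha) x)%Z.
Proof.
move=> pr a1 hd x.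
set q := (p ^ alpha)%N.
set n := (p ^ (alpha - 1))%N.
have n0 : (0 < n)%N by rewrite expn_gt0 prime_gt0.
have hq : q = (n * p)%N by rewrite /q /n -expnSr subn1 prednK.
set M : {poly int} := 'X^q - 1.
set pp : {poly int} := (p%:Z)%:P.
have [h Hh] := @F1 p (alpha - 1) pr.
have [g Hg] := @F2 p n pr n0.
set Phi := \sum_(i < p) ('X^n : {poly int}) ^+ i.
have Hu : (1 - 'X^n) * Phi = - M.
  have := subrXX 1 ('X^n : {poly int}) p; rewrite expr1n => e.
  rewrite /M opprB hq exprM e; congr (_ * _).
  by apply: eq_bigr => i _; rewrite expr1n mul1r.
have HI := @mainI M pp (1 - 'X^n) Phi g h p beta (prime_gt1 pr) Hu Hg.
rewrite -/n -Hh -exprM in HI.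
have HD : inI M pp beta ((1 - 'X) ^+ delta).
  have hd' : (n * (beta * (p - 1) + 1) <= delta)%N by rewrite mulnC.
  by rewrite -(subnKC hd') exprD; apply: inIMl.
case: HD => A [B HAB].
have -> : binom_q delta q x = sumc q x (delta.+1) ((1 - 'X) ^+ delta).
  by rewrite /binom_q /sumc; apply: eq_bigr => k _; rewrite coefX1.
rewrite -(@sumc_ext q x (delta.+1 + (size A + q)) delta.+1 _ (leq_addr _ _)); last first.
  by move=> k hk; rewrite coefX1 bin_small ?mulr0.
rewrite HAB sumcD /M mulrBr mulr1 sumcB sumc_shift ?leq_addl // subrr add0r /pp sumc_pp.
apply: dvdz_mulr; rewrite -[Posz (p ^ beta)%N]natz natrX natz; exact: dvdzz.
Qed.
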